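(* Let $P,Q\in\mathbb{T}^{r\times s}$ and suppose that every column of $P$ and $Q^\top$ has at least one entry distinct from $-\infty$. Consider the tropical Nash equilibrium complementarity problem: find $(w,z)\in\mathbb{T}^{r+s}\times\mathbb{T}^{r+s}$ with $w\oplus M^-\odot z=q^+$, $w^\top\odot z=-\infty$, $z\neq-\infty$, where $M^-=\begin{psmallmatrix}-\infty & P\\ Q^\top & -\infty\end{psmallmatrix}$ and $q^+$ is the all-$0$ vector of size $r+s$. Then the normalization maps bijectively the projections $z$ of the solutions of this problem to the pairs $(x^*,y^* )\in\Delta^{\mathrm{trop}}_{r-1}\times\Delta^{\mathrm{trop}}_{s-1}$ that satisfy: for all $i\in[r]$, $x^*_i>-\infty$ implies $(P\odot y^* )_i\geq(P\odot y^* )_k$ for all $k\in[r]$; and for all $j\in[s]$, $y^*_j>-\infty$ implies $(Q^\top\odot x^* )_j\geq(Q^\top\odot x^* )_l$ for all $l\in[s]$.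
   Context: $\mathbb{T}=\mathbb{R}\cup\{-\infty\}$ is the max-plus semifield ($\oplus=\max$, $\odot=+$). $\Delta^{\mathrm{trop}}_p=\{z\in\mathbb{T}^{p+1}:\bigoplus_k z_k=0\}$. For $z=(x,y)$ with $x\in\mathbb{T}^r$, $y\in\mathbb{T}^s$ each having an entry distinct from $-\infty$, its normalization is the pair $(\alpha\odot x,\beta\odot y)\in\Delta^{\mathrm{trop}}_{r-1}\times\Delta^{\mathrm{trop}}_{s-1}$ for suitable scalars $\alpha,\beta\in\mathbb{T}$. *)

(* Defs.v *)
(* Max-plus semifield T = R ∪ {-oo}, encoded as option R
   (None = -oo), over an ordered field R (realFieldType). *)
From HB Require Import structures.
From mathcomp Require Import all_boot all_order all_algebra.
Set Implicit Arguments. Unset Strict Implicit. Unset Printing Implicit Defensive.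
Import Order.TTheory GRing.Theory Num.Theory.
Local Open Scope ring_scope.

Section Trop.
Variable R : realFieldType.

Definition trop := option R.

Definition tplus (a b : trop) : trop :=
  match a, b with
  | None, _ => b
  | _, None => a
  | Some x, Some y => Some (Num.max x y)
  end.

Definition tmul (a b : trop) : trop :=
  match a, b with
  | Some x, Some y => Some (x + y)
  | _, _ => None
  end.

Definition tle (a b : trop) : bool :=
  match a, b with
  | None, _ => true
  | Some _, None => false
  | Some x, Some y => x <= y
  end.

Definition tsum n (v : 'I_n -> trop) : trop := \big[tplus/None]_(i < n) v i.

Definition tdot n (w z : 'I_n -> trop) : trop :=
  \big[tplus/None]_(i < n) tmul (w i) (z i).

Definition tmv m n (A : 'M[trop]_(m, n)) (v : 'I_n -> trop) : 'I_m -> trop :=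
  fun i => \big[tplus/None]_(j < n) tmul (A i j) (v j).

Definition Mminus r s (P Q : 'M[trop]_(r, s)) : 'M[trop]_(r + s) :=
  \matrix_(i, j)
    match split i, split j with
    | inl a, inr b => P a b
    | inr a, inl b => Q b a
    | _, _ => None
    end.

Definition inDelta n (x : 'I_n -> trop) : Prop := tsum x = Some 0.

Definition normalize n (x : 'I_n -> trop) : {ffun 'I_n -> trop} :=
  let m := match tsum x with Some m => m | None => 0 end in
  [ffun i => tmul (Some (- m)) (x i)].

Definition xpart r s (z : 'I_(r + s) -> trop) : 'I_r -> trop := fun i => z (lshift s i).
Definition ypart r s (z : 'I_(r + s) -> trop) : 'I_s -> trop := fun j => z (rshift r j).

Definition nash_pair r s (P Q : 'M[trop]_(r, s)) (x : 'I_r -> trop) (y : 'I_s -> trop)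
  : Prop :=
  (forall i : 'I_r, x i <> None -> forall k : 'I_r, tle (tmv P y k) (tmv P y i)) /\
  (forall j : 'I_s, y j <> None -> forall l : 'I_s,
       tle (tmv (trmx Q) x l) (tmv (trmx Q) x j)).

Definition tnecp_sol r s (P Q : 'M[trop]_(r, s)) (w z : 'I_(r + s) -> trop) : Prop :=
  (forall i, tplus (w i) (tmv (Mminus P Q) z i) = Some 0) /\
  tdot w z = None /\
  (exists i, z i <> None).

End Trop.

(* Main.v *)
From HB Require Import structures.
Require Import Defs.
From mathcomp Require Import all_boot all_order all_algebra.
Set Implicit Arguments. Unset Strict Implicit. Unset Printing Implicit Defensive.
Import Order.TTheory GRing.Theory Num.Theory.
Local Open Scope ring_scope.

Section L.
Variable R : realFieldType.

Lemma tplusA : associative (@tplus R).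
Proof. by case=> [x|] [y|] [z|] //=; rewrite maxA. Qed.
Lemma tplusC : commutative (@tplus R).
Proof. by case=> [x|] [y|] //=; rewrite maxC. Qed.
Lemma tplus0l : left_id None (@tplus R).
Proof. by case. Qed.

HB.instance Definition _ := Monoid.isComLaw.Build (trop R) None (@tplus R) tplusA tplusC tplus0l.

Section Ord.
Implicit Types a b c : trop R.
Lemma tle_refl a : tle a a.
Proof. by case: a => //= x. Qed.
Lemma tle_trans a b c : tle a b -> tle b c -> tle a c.
Proof. case: a => [x|]; case: b => [y|]; case: c => [z|] //=; exact: le_trans. Qed.
Lemma tle_anti a b : tle a b -> tle b a -> a = b.
Proof. case: a => [x|]; case: b => [y|] //= => h1 h2 //; congr Some; apply: le_anti; by rewrite h1 h2. Qed.
Lemma tle_None a : tle a None -> a = None.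
Proof. by case: a. Qed.
Lemma tplus_lub a b c : tle a c -> tle b c -> tle (tplus a b) c.
Proof. case: a => [x|]; case: b => [y|]; case: c => [z|] //= h1 h2; by rewrite ge_max h1 h2. Qed.
Lemma tplus_ubl a b : tle a (tplus a b).
Proof. case: a => [x|]; case: b => [y|] //=; by rewrite ?le_max ?lexx. Qed.
Lemma tplus_ubr a b : tle b (tplus a b).
Proof. rewrite tplusC; exact: tplus_ubl. Qed.
Lemma tplus_eq a b : tplus a b = a \/ tplus a b = b.
Proof. case: a => [x|]; case: b => [y|] /=; auto. rewrite /Num.max. case: ifP; auto. Qed.
Lemma tplus_le a b : tle b a -> tplus a b = a.
Proof. move=> h; apply: tle_anti; [apply: tplus_lub => //; exact: tle_refl|exact: tplus_ubl]. Qed.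

Lemma tmulA a b c : tmul a (tmul b c) = tmul (tmul a b) c.
Proof. by case: a => [x|]; case: b => [y|]; case: c => [z|] //=; rewrite addrA. Qed.
Lemma tmulC a b : tmul a b = tmul b a.
Proof. by case: a => [x|]; case: b => [y|] //=; rewrite addrC. Qed.
Lemma tmul_shift_le (x : R) a b : tle a b -> tle (tmul (Some x) a) (tmul (Some x) b).
Proof. case: a => [y|]; case: b => [z|] //=; by rewrite lerD2l. Qed.
Lemma tmul_plus (x : R) a b : tmul (Some x) (tplus a b) = tplus (tmul (Some x) a) (tmul (Some x) b).
Proof. case: a => [y|]; case: b => [z|] //=; by rewrite addr_maxr. Qed.
Lemma tmul_None_r a : tmul a None = None.
Proof. by case: a. Qed.
Lemma tmulK (x : R) a : tmul (Some (- x)) (tmul (Some x) a) = a.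
Proof. case: a => //= y; by rewrite addKr. Qed.
Lemma tmulK' (x : R) a : tmul (Some x) (tmul (Some (-x)) a) = a.
Proof. case: a => //= y; by rewrite addNKr. Qed.
Lemma tmul_None (x : R) a : (tmul (Some x) a == None) = (a == None).
Proof. by case: a. Qed.

End Ord.
Section Big.
Variables (n : nat) (F : 'I_n -> trop R).
Lemma big_ub i : tle (F i) (\big[@tplus R/None]_(j < n) F j).
Proof. rewrite (bigD1 i) //=; exact: tplus_ubl. Qed.
Lemma big_lub c : (forall i, tle (F i) c) -> tle (\big[@tplus R/None]_(j < n) F j) c.
Proof. move=> h; apply: (big_ind (fun x => tle x c)) => // x y; exact: tplus_lub. Qed.
Lemma big_att m : \big[@tplus R/None]_(j < n) F j = Some m -> exists i, F i = Some m.
Proof.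
have : \big[@tplus R/None]_(j < n) F j = None \/ exists i, F i = \big[@tplus R/None]_(j < n) F j.
  apply: (big_ind (fun x => x = None \/ exists i, F i = x)); [by left| |by eauto].
  move=> x y hx hy; case: (tplus_eq x y) => ->; auto.
case=> [->//|[i hi] hm]; exists i; by rewrite hi.
Qed.
Lemma big_shift x : tmul (Some x) (\big[@tplus R/None]_(j < n) F j) = \big[@tplus R/None]_(j < n) tmul (Some x) (F j).
Proof. apply: (big_morph (fun a => tmul (Some x) a)) => //; exact: tmul_plus. Qed.
End Big.

Lemma tmv_shift m n (A : 'M[trop R]_(m, n)) (v : 'I_n -> trop R) x i :
  tmv A (fun j => tmul (Some x) (v j)) i = tmul (Some x) (tmv A v i).
Proof. rewrite /tmv big_shift; apply: eq_bigr => j _; by rewrite !tmulA (tmulC (A i j)). Qed.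
Lemma tmv_ext m n (A : 'M[trop R]_(m, n)) (v v' : 'I_n -> trop R) i :
  (forall j, v j = v' j) -> tmv A v i = tmv A v' i.
Proof. move=> h; apply: eq_bigr => j _; by rewrite h. Qed.


Lemma splitl m n (a : 'I_m) : split (lshift n a) = inl a.
Proof. exact: (unsplitK (inl a)). Qed.
Lemma splitr m n (a : 'I_n) : split (rshift m a) = inr a.
Proof. exact: (unsplitK (inr a)). Qed.

Lemma tmv_nonNone m n (A : 'M[trop R]_(m, n)) v i : tmv A v i <> None -> exists j, v j <> None.
Proof.
move=> h; case: (pickP (fun j => v j != None)) => [j /eqP hj|hv]; first by exists j.
case: h; apply: big1 => j _; move: (hv j); case: (v j) => //= _; by rewrite tmul_None_r.
Qed.

Lemma tsum_Some n (F : 'I_n -> trop R) j : F j <> None -> exists c : R, tsum F = Some c.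
Proof.
move=> h; case e: (tsum F) => [c|]; first by exists c.
by case: h; apply: tle_None; rewrite -e; exact: big_ub.
Qed.

Lemma normalizeE n (v : 'I_n -> trop R) m : tsum v = Some m -> forall i, normalize v i = tmul (Some (- m)) (v i).
Proof. by move=> h i; rewrite /normalize ffunE h. Qed.

Lemma normalize_None n (v : 'I_n -> trop R) i : (normalize v i == None) = (v i == None).
Proof. by rewrite /normalize ffunE tmul_None. Qed.

Lemma tsum_shift n (v : 'I_n -> trop R) e : tsum (fun i => tmul (Some e) (v i)) = tmul (Some e) (tsum v).
Proof. by rewrite /tsum big_shift. Qed.

Lemma inDelta_norm n (v : 'I_n -> trop R) j : v j <> None -> inDelta (normalize v).
Proof.
move=> h; have [m hm] := tsum_Some h.
rewrite /inDelta /tsum (eq_bigr _ (fun i _ => normalizeE hm i)) -big_shift.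
by rewrite -/(tsum v) hm /= addNr.
Qed.

Lemma tmv_norm m n (A : 'M[trop R]_(m, n)) v mv : tsum v = Some mv ->
  forall k, tmv A (normalize v) k = tmul (Some (- mv)) (tmv A v k).
Proof. move=> h k; rewrite -tmv_shift; apply: tmv_ext => j; exact: normalizeE. Qed.

Lemma nash_half m n (A : 'M[trop R]_(m, n)) (u : 'I_m -> trop R) (v : 'I_n -> trop R) :
  (forall a, tle (tmv A v a) (Some 0)) -> (forall a, u a <> None -> tmv A v a = Some 0) ->
  (exists b, v b <> None) ->
  forall i, normalize u i <> None -> forall k, tle (tmv A (normalize v) k) (tmv A (normalize v) i).
Proof.
move=> h1 h2 [b hb] i hi k; have [mv hmv] := tsum_Some hb.
rewrite !(tmv_norm _ hmv); apply: tmul_shift_le; rewrite (h2 i) //.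
by move/eqP; rewrite -normalize_None; move/eqP.
Qed.

Lemma recover m n (A : 'M[trop R]_(m, n)) (u u' : 'I_m -> trop R) (v v' : 'I_n -> trop R) :
  (forall a, u a <> None -> tmv A v a = Some 0) ->
  (forall a, u' a <> None -> tmv A v' a = Some 0) ->
  normalize u = normalize u' -> normalize v = normalize v' ->
  (exists a, u a <> None) -> (exists b, v b <> None) -> (exists b, v' b <> None) ->
  forall j, v j = v' j.
Proof.
move=> h1 h2 eu ev [a ha] [b hb] [b' hb'] j.
have ha' : u' a <> None.
  move/eqP: ha; rewrite -normalize_None eu normalize_None; by move/eqP.
have [mv hmv] := tsum_Some hb; have [mv' hmv'] := tsum_Some hb'.
have e1 := tmv_norm A hmv a; have e2 := tmv_norm A hmv' a.
rewrite h1 // in e1; rewrite (h2 a) // -ev e1 /= in e2.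
have emv : mv = mv' by case: e2; rewrite !addr0 => /oppr_inj.
rewrite -(tmulK' mv (v j)) -(tmulK' mv' (v' j)) -(normalizeE hmv) -(normalizeE hmv') ev emv.
done.
Qed.

Lemma part3_half m n (A : 'M[trop R]_(m, n)) (u u' : 'I_m -> trop R) (v v' : 'I_n -> trop R) d c :
  tsum (tmv A v) = Some d ->
  (forall i, u i <> None -> forall k, tle (tmv A v k) (tmv A v i)) ->
  (forall i, u' i = tmul (Some c) (u i)) -> (forall j, v' j = tmul (Some (- d)) (v j)) ->
  (forall a, tle (tmv A v' a) (Some 0)) /\ (forall a, u' a <> None -> tmv A v' a = Some 0).
Proof.
move=> hd hn hu hv.
have e : forall a, tmv A v' a = tmul (Some (- d)) (tmv A v a).
  move=> a; rewrite -tmv_shift; exact: tmv_ext.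
split=> a; rewrite e.
  have -> : Some (0 : R) = tmul (Some (- d)) (Some d) by rewrite /= addNr.
  apply: tmul_shift_le; rewrite -hd; exact: (big_ub (tmv A v)).
move=> ha; have ha2 : u a <> None.
  by move: ha; rewrite hu; case: (u a).
have -> : tmv A v a = Some d.
  apply: tle_anti; first by rewrite -hd; exact: (big_ub (tmv A v)).
  rewrite -hd; apply: big_lub => k; exact: hn.
by rewrite /= addNr.
Qed.

Lemma norm_shift n (u : {ffun 'I_n -> trop R}) (u' : 'I_n -> trop R) e :
  tsum u = Some 0 -> (forall i, u' i = tmul (Some e) (u i)) -> normalize u' = u.
Proof.
move=> h hu; have hs : tsum u' = Some (e + 0).
  by rewrite /tsum (eq_bigr _ (fun i _ => hu i)) -big_shift -/(tsum u) h.
by apply/ffunP => i; rewrite (normalizeE hs) hu addr0 tmulK.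
Qed.

Section Blk.
Variables (r s : nat) (P Q : 'M[trop R]_(r, s)).

Lemma tmv_Ml (z : 'I_(r + s) -> trop R) a : tmv (Mminus P Q) z (lshift s a) = tmv P (ypart z) a.
Proof.
rewrite /tmv big_split_ord /= big1 => [|b _]; last by rewrite /Mminus mxE !splitl.
by rewrite tplus0l; apply: eq_bigr => b _; rewrite /Mminus mxE splitl splitr.
Qed.
Lemma tmv_Mr (z : 'I_(r + s) -> trop R) a : tmv (Mminus P Q) z (rshift r a) = tmv (trmx Q) (xpart z) a.
Proof.
rewrite /tmv big_split_ord /= [X in tplus _ X]big1 => [|b _]; last by rewrite /Mminus mxE !splitr.
by rewrite tplusC tplus0l; apply: eq_bigr => b _; rewrite /Mminus mxE splitl splitr mxE.
Qed.

Definition solc (z : 'I_(r + s) -> trop R) :=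
  [/\ (forall a, tle (tmv P (ypart z) a) (Some 0)),
      (forall a, xpart z a <> None -> tmv P (ypart z) a = Some 0),
      (forall b, tle (tmv (trmx Q) (xpart z) b) (Some 0)),
      (forall b, ypart z b <> None -> tmv (trmx Q) (xpart z) b = Some 0) &
      exists k, z k <> None].

Lemma sol_solc z : (exists w, tnecp_sol P Q w z) -> solc z.
Proof.
move=> [w [h1 [h2 h3]]].
have g : forall k, tle (tmv (Mminus P Q) z k) (Some 0) /\ (z k <> None -> tmv (Mminus P Q) z k = Some 0).
  move=> k; split; first by rewrite -(h1 k); exact: tplus_ubr.
  move=> hz; have : tmul (w k) (z k) = None.
    apply: tle_None; rewrite -h2; exact: (big_ub (fun i => tmul (w i) (z i))).
  by move: (h1 k) hz; case: (w k) => // x; case: (z k).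
split=> //.
- by move=> a; rewrite -tmv_Ml; case: (g (lshift s a)).
- by move=> a; rewrite -tmv_Ml; case: (g (lshift s a)) => _; apply.
- by move=> a; rewrite -tmv_Mr; case: (g (rshift r a)).
- by move=> a; rewrite -tmv_Mr; case: (g (rshift r a)) => _; apply.
Qed.

Lemma solc_sol z : solc z -> exists w, tnecp_sol P Q w z.
Proof.
case=> h1 h2 h3 h4 h5.
exists (fun k => if z k is None then Some 0 else None); split; last split=> //.
- move=> i /=; case e: (z i) => [x|] /=.
    case: (split_ordP i) e => a -> e.
      by rewrite tmv_Ml h2 // /xpart e.
    by rewrite tmv_Mr h4 // /ypart e.
  change (tplus (Some 0) (tmv (Mminus P Q) z i) = Some 0).
  rewrite tplus_le //; case: (split_ordP i) => a ->; by rewrite ?tmv_Ml ?tmv_Mr.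
- by apply: big1 => k _; case: (z k).
Qed.

Lemma solc_ex z : solc z -> (exists a, xpart z a <> None) /\ (exists b, ypart z b <> None).
Proof.
case=> h1 h2 h3 h4 [k hk]; case: (split_ordP k) hk => a -> hk.
  have [b hb] : exists b, ypart z b <> None.
    by apply: (tmv_nonNone (A:=P) (i:=a)); rewrite h2.
  by split; [exists a|exists b].
have [b hb] : exists b, xpart z b <> None.
  by apply: (tmv_nonNone (A:=trmx Q) (i:=a)); rewrite h4.
by split; [exists b|exists a].
Qed.
End Blk.
End L.

Unset Implicit Arguments.
Set Strict Implicit.

Theorem proposition6p1 (R : realFieldType) (r s : nat) (P Q : 'M[trop R]_(r, s))
  (hP : forall j : 'I_s, exists i : 'I_r, P i j <> None)
  (hQ : forall i : 'I_r, exists j : 'I_s, Q i j <> None) :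
  let sol (z : {ffun 'I_(r + s) -> trop R}) :=
    exists w : 'I_(r + s) -> trop R, tnecp_sol P Q w z in
  let nrm (z : {ffun 'I_(r + s) -> trop R}) :=
    (normalize (xpart z), normalize (ypart z)) in
  (forall z, sol z ->
     inDelta (nrm z).1 /\ inDelta (nrm z).2 /\ nash_pair P Q (nrm z).1 (nrm z).2) /\
  (forall z z', sol z -> sol z' -> nrm z = nrm z' -> z = z') /\
  (forall (x : {ffun 'I_r -> trop R}) (y : {ffun 'I_s -> trop R}),
     inDelta x -> inDelta y -> nash_pair P Q x y ->
     exists z, sol z /\ nrm z = (x, y)).
Proof.
move=> sol nrm; split; [|split].
- move=> z /sol_solc hz; have [[a ha] [b hb]] := solc_ex hz.
  case: hz => h1 h2 h3 h4 _.
  split; [exact: inDelta_norm ha|split; [exact: inDelta_norm hb|split]].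
    exact: (nash_half h1 h2 (ex_intro _ b hb)).
  exact: (nash_half h3 h4 (ex_intro _ a ha)).
- move=> z z' /sol_solc hz /sol_solc hz' [ex ey].
  have [exX exY] := solc_ex hz; have [exX' exY'] := solc_ex hz'.
  case: hz => h1 h2 h3 h4 _; case: hz' => h1' h2' h3' h4' _.
  have eY := recover h2 h2' ex ey exX exY exY'.
  have eX := recover h4 h4' ey ex exY exX exX'.
  apply/ffunP => k; case: (split_ordP k) => a ->; [exact: eX a|exact: eY a].
- move=> x y hx hy [hn1 hn2].
  have [a xa] : exists a, x a = Some 0 by apply: big_att; exact: hx.
  have [b yb] : exists b, y b = Some 0 by apply: big_att; exact: hy.
  have [j hj] := hQ a; have [i hi] := hP b.
  have [c hc] : exists c : R, tsum (tmv (trmx Q) x) = Some c.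
    apply: (tsum_Some (j:=j)) => e; apply: hj.
    have := @big_ub _ _ (fun k => tmul (trmx Q j k) (x k)) a.
    rewrite /tmv in e; rewrite e mxE xa; by case: (Q a j).
  have [d hd] : exists d : R, tsum (tmv P y) = Some d.
    apply: (tsum_Some (j:=i)) => e; apply: hi.
    have := @big_ub _ _ (fun k => tmul (P i k) (y k)) b.
    rewrite /tmv in e; rewrite e yb; by case: (P i b).
  pose z := [ffun k => match split k with inl i => tmul (Some (-c)) (x i) | inr j => tmul (Some (-d)) (y j) end].
  have zx : forall i, xpart z i = tmul (Some (-c)) (x i) by move=> i'; rewrite /xpart ffunE splitl.
  have zy : forall j, ypart z j = tmul (Some (-d)) (y j) by move=> j'; rewrite /ypart ffunE splitr.
  have [p1 p2] := part3_half hd hn1 zx zy.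
  have [q1 q2] := part3_half hc hn2 zy zx.
  exists z; split.
    apply: solc_sol; split => //; exists (lshift s a); by rewrite ffunE splitl xa.
  by rewrite /nrm (norm_shift hx zx) (norm_shift hy zy).
Qed.
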